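(* Let $n\ge 1$ and $d\ge 1$ be integers, let $\mathcal{X}\subset\mathbb{R}^d$ be compact and convex, let $\mathbf{x}_0\in\mathcal{X}$, let $w_0,w_1,\dots,w_n\in\mathbb{R}$, and let $\mathbf{t}_1,\dots,\mathbf{t}_n\in\mathbb{R}^d$. Consider the $n$-player game $G$ in which player $i\in[n]$ chooses $\mathbf{x}_i\in\mathcal{X}$ and incurs the loss $\ell_i(\mathbf{x}_1,\dots,\mathbf{x}_n)=\|w_0\mathbf{x}_0+\sum_{j=1}^n w_j\mathbf{x}_j-\mathbf{t}_i\|_2^2$. Let $\phi(\mathbf{x}_1,\dots,\mathbf{x}_n)=\|\sum_{i=0}^n w_i\mathbf{x}_i\|_2^2-2\sum_{i=1}^n w_i\mathbf{t}_i^\top\mathbf{x}_i$. Then the set of pure Nash equilibria of $G$ equals $\operatorname{argmin}_{\mathbf{x}\in\mathcal{X}^n}\phi(\mathbf{x})$.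
   Context: A pure Nash equilibrium of $G$ is a profile $\mathbf{x}=(\mathbf{x}_1,\dots,\mathbf{x}_n)\in\mathcal{X}^n$ such that $\ell_i(\mathbf{x}_i,\mathbf{x}_{-i})\le\ell_i(\mathbf{y},\mathbf{x}_{-i})$ for all $\mathbf{y}\in\mathcal{X}$ and all $i\in[n]$, where $(\mathbf{y},\mathbf{x}_{-i})$ denotes the profile with player $i$'s action replaced by $\mathbf{y}$. *)

(* Defs.v *)
From HB Require Import structures.
From mathcomp Require Import all_boot all_order all_algebra.
From mathcomp Require Import all_classical all_reals all_analysis.
Set Implicit Arguments. Unset Strict Implicit. Unset Printing Implicit Defensive.
Import Order.TTheory GRing.Theory Num.Theory.
Import numFieldNormedType.Exports.
Local Open Scope classical_set_scope.
Local Open Scope ring_scope.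

Definition sqnorm (R : realType) (d : nat) (v : 'rV[R]_d) : R :=
  \sum_(k < d) (v ord0 k) ^+ 2.

Definition dotv (R : realType) (d : nat) (u v : 'rV[R]_d) : R :=
  \sum_(k < d) u ord0 k * v ord0 k.

Definition loss (R : realType) (d n : nat) (w0 : R) (x0 : 'rV[R]_d)
  (w : 'I_n -> R) (t : 'I_n -> 'rV[R]_d) (i : 'I_n)
  (x : 'I_n -> 'rV[R]_d) : R :=
  sqnorm (w0 *: x0 + \sum_(j < n) w j *: x j - t i).

Definition potential (R : realType) (d n : nat) (w0 : R) (x0 : 'rV[R]_d)
  (w : 'I_n -> R) (t : 'I_n -> 'rV[R]_d) (x : 'I_n -> 'rV[R]_d) : R :=
  sqnorm (w0 *: x0 + \sum_(j < n) w j *: x j)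
  - 2 * \sum_(i < n) w i * dotv (t i) (x i).

Definition upd (R : realType) (d n : nat) (x : 'I_n -> 'rV[R]_d) (i : 'I_n)
  (y : 'rV[R]_d) : 'I_n -> 'rV[R]_d :=
  fun j => if j == i then y else x j.

Definition profile_in (R : realType) (d n : nat) (X : set 'rV[R]_d)
  (x : 'I_n -> 'rV[R]_d) : Prop := forall i, X (x i).

Definition pure_nash (R : realType) (d n : nat) (X : set 'rV[R]_d)
  (l : 'I_n -> ('I_n -> 'rV[R]_d) -> R) (x : 'I_n -> 'rV[R]_d) : Prop :=
  profile_in X x /\
  forall (i : 'I_n) (y : 'rV[R]_d), X y -> l i x <= l i (upd x i y).

Definition is_argmin (R : realType) (d n : nat) (X : set 'rV[R]_d)
  (f : ('I_n -> 'rV[R]_d) -> R) (x : 'I_n -> 'rV[R]_d) : Prop :=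
  profile_in X x /\ forall z, profile_in X z -> f x <= f z.

(* Main.v *)
Require Import Defs.
From HB Require Import structures.
From mathcomp Require Import all_boot all_order all_algebra.
From mathcomp Require Import all_classical all_reals all_analysis.
From mathcomp Require Import ring lra.
Import Order.TTheory GRing.Theory Num.Theory.
Import numFieldNormedType.Exports.
Local Open Scope classical_set_scope.
Local Open Scope ring_scope.
Set Implicit Arguments. Unset Strict Implicit. Unset Printing Implicit Defensive.

Section Aux.
Variables (R : realType) (d : nat).
Implicit Types u v : 'rV[R]_d.

Lemma dotvC u v : dotv u v = dotv v u.
Proof. by apply: eq_bigr => k _; rewrite mulrC. Qed.

Lemma dotvDl u1 u2 v : dotv (u1 + u2) v = dotv u1 v + dotv u2 v.
Proof. by rewrite /dotv -big_split; apply: eq_bigr => k _; rewrite mxE mulrDl. Qed.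

Lemma dotvZl a u v : dotv (a *: u) v = a * dotv u v.
Proof. by rewrite /dotv mulr_sumr; apply: eq_bigr => k _; rewrite mxE mulrA. Qed.

Lemma dotvNl u v : dotv (- u) v = - dotv u v.
Proof. by rewrite -scaleN1r dotvZl mulN1r. Qed.

Lemma dotvBl u1 u2 v : dotv (u1 - u2) v = dotv u1 v - dotv u2 v.
Proof. by rewrite dotvDl dotvNl. Qed.

Lemma dotvDr u v1 v2 : dotv u (v1 + v2) = dotv u v1 + dotv u v2.
Proof. by rewrite !(dotvC u) dotvDl. Qed.
Lemma dotvZr a u v : dotv u (a *: v) = a * dotv u v.
Proof. by rewrite !(dotvC u) dotvZl. Qed.
Lemma dotvBr u v1 v2 : dotv u (v1 - v2) = dotv u v1 - dotv u v2.
Proof. by rewrite !(dotvC u) dotvBl. Qed.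

Lemma dotv_sumr n u (f : 'I_n -> 'rV[R]_d) :
  dotv u (\sum_(j < n) f j) = \sum_(j < n) dotv u (f j).
Proof.
elim/big_ind2: _ => //.
  by rewrite /dotv big1 // => k _; rewrite mxE mulr0.
by move=> a b c e <- <-; rewrite dotvDr.
Qed.

Lemma sqnormE v : sqnorm v = dotv v v.
Proof. by apply: eq_bigr => k _; rewrite expr2. Qed.

Lemma sqnormD u v : sqnorm (u + v) = sqnorm u + 2 * dotv u v + sqnorm v.
Proof.
rewrite !sqnormE dotvDl !dotvDr (dotvC v u); ring.
Qed.

Lemma sqnorm_ge0 v : 0 <= sqnorm v.
Proof. by apply: sumr_ge0 => k _; rewrite sqr_ge0. Qed.

End Aux.

Lemma lin_quad (R : realType) (g c : R) : 0 <= c ->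
  (forall s : R, 0 < s -> s <= 1 -> 0 <= s * g + s ^+ 2 * c) -> 0 <= g.
Proof.
move=> c0 H; rewrite leNgt; apply/negP => g0.
have cg : 0 < c - g by lra.
pose s := - g / (c - g).
have s0 : 0 < s by rewrite /s divr_gt0 // oppr_gt0.
have s1 : s <= 1 by rewrite /s ler_pdivrMr // mul1r; lra.
have key : g + s * c = g * s.
  rewrite /s; field. rewrite subr_eq0; apply/negP => /eqP E; lra.
clearbody s; have := H s s0 s1.
have -> : s * g + s ^+ 2 * c = s * s * g.
  have -> : s * g + s ^+ 2 * c = s * (g + s * c) by ring.
  rewrite key; ring.
rewrite leNgt => /negP; apply; rewrite pmulr_rlt0 ?mulr_gt0 //.
Qed.

Section Game.
Variables (R : realType) (d n : nat) (w0 : R) (x0 : 'rV[R]_d)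
  (w : 'I_n -> R) (t : 'I_n -> 'rV[R]_d).

Definition Sx (x : 'I_n -> 'rV[R]_d) := w0 *: x0 + \sum_(j < n) w j *: x j.

Lemma SxB z x : Sx z = Sx x + \sum_(j < n) w j *: (z j - x j).
Proof.
rewrite /Sx -addrA; congr (_ + _).
have -> : \sum_(j < n) w j *: (z j - x j) = \sum_(j < n) (w j *: z j - w j *: x j).
  by apply: eq_bigr => j _; rewrite scalerBr.
by rewrite sumrB addrC subrK.
Qed.

Lemma potB z x : potential w0 x0 w t z - potential w0 x0 w t x =
  2 * dotv (Sx x) (\sum_(j < n) w j *: (z j - x j))
  + sqnorm (\sum_(j < n) w j *: (z j - x j))
  - 2 * \sum_(j < n) w j * dotv (t j) (z j - x j).
Proof.
rewrite /potential -/(Sx z) -/(Sx x) (SxB z x) sqnormD.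
have -> : \sum_(j < n) w j * dotv (t j) (z j - x j) =
   \sum_(j < n) w j * dotv (t j) (z j) - \sum_(j < n) w j * dotv (t j) (x j).
  by rewrite -sumrB; apply: eq_bigr => j _; rewrite dotvBr mulrBr.
ring.
Qed.

Lemma lossB x i y : loss w0 x0 w t i (upd x i y) - loss w0 x0 w t i x =
  2 * dotv (Sx x - t i) (w i *: (y - x i)) + sqnorm (w i *: (y - x i)).
Proof.
rewrite /loss -/(Sx x) -/(Sx (upd x i y)) (SxB (upd x i y) x).
have -> : \sum_(j < n) w j *: (upd x i y j - x j) = w i *: (y - x i).
  rewrite (bigD1 i) //= big1 ?addr0 => [|j /negbTE ji]; first by rewrite /upd eqxx.
  by rewrite /upd ji subrr scaler0.
rewrite addrAC sqnormD; ring.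
Qed.

Lemma potB_upd x i y : potential w0 x0 w t (upd x i y) - potential w0 x0 w t x =
  loss w0 x0 w t i (upd x i y) - loss w0 x0 w t i x.
Proof.
rewrite potB lossB.
have -> : \sum_(j < n) w j *: (upd x i y j - x j) = w i *: (y - x i).
  rewrite (bigD1 i) //= big1 ?addr0 => [|j /negbTE ji]; first by rewrite /upd eqxx.
  by rewrite /upd ji subrr scaler0.
have -> : \sum_(j < n) w j * dotv (t j) (upd x i y j - x j) = w i * dotv (t i) (y - x i).
  rewrite (bigD1 i) //= big1 ?addr0 => [|j /negbTE ji]; first by rewrite /upd eqxx.
  by rewrite /upd ji subrr -(scale0r (0 : 'rV[R]_d)) dotvZr !mul0r mulr0.
rewrite dotvBl !dotvZr.
set a := dotv _ _; set b := dotv _ _; set c := sqnorm _; ring.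
Qed.

End Game.

Lemma sqnormZ (R : realType) (d : nat) (a : R) (v : 'rV[R]_d) :
  sqnorm (a *: v) = a ^+ 2 * sqnorm v.
Proof. by rewrite !sqnormE dotvZl dotvZr mulrA expr2. Qed.

Theorem proposition1 (R : realType) (n d : nat) (hn : (1 <= n)%N) (hd : (1 <= d)%N)
  (X : set 'rV[R]_d) (hXc : compact X)
  (hXv : convex_set (X : set (convex_lmodType 'rV[R]_d)))
  (x0 : 'rV[R]_d) (hx0 : X x0) (w0 : R) (w : 'I_n -> R)
  (t : 'I_n -> 'rV[R]_d) :
  [set x | pure_nash X (loss w0 x0 w t) x] =
  [set x | is_argmin X (potential w0 x0 w t) x].
Proof.
apply/seteqP; split => x /=.
  move=> [hx hN]; split => // z hz.
  pose D j := z j - x j.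
  pose G := \sum_(i < n) 2 * dotv (Sx w0 x0 w x - t i) (w i *: D i).
  pose C := \sum_(i < n) sqnorm (w i *: D i).
  have hG : 0 <= G.
    apply: (@lin_quad _ G C); first by apply: sumr_ge0 => i _; exact: sqnorm_ge0.
    move=> s s0 s1.
    have -> : s * G + s ^+ 2 * C =
      \sum_(i < n) (s * (2 * dotv (Sx w0 x0 w x - t i) (w i *: D i))
                    + s ^+ 2 * sqnorm (w i *: D i)).
      by rewrite big_split /= !mulr_sumr.
    apply: sumr_ge0 => i _.
    have Xy : X (x i + s *: D i).
      have := hXv (z i) (x i) (Itv01 (ltW s0) s1).
      rewrite !inE => /(_ (hz i) (hx i)).
      suff -> : x i + s *: D i = s *: z i + (1 - s) *: x i by [].
      by rewrite /D scalerBr scalerBl scale1r addrCA addrC [_ + s *: z i]addrC.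
    have := hN i _ Xy; rewrite -subr_ge0 lossB.
    have -> : x i + s *: D i - x i = s *: D i by rewrite addrC addKr.
    have -> : w i *: (s *: D i) = s *: (w i *: D i) by rewrite !scalerA mulrC.
    by rewrite dotvZr sqnormZ mulrCA.
  rewrite -subr_ge0 potB.
  have E : 2 * dotv (Sx w0 x0 w x) (\sum_(j < n) w j *: (z j - x j)) -
      2 * \sum_(j < n) w j * dotv (t j) (z j - x j) = G.
    rewrite /G dotv_sumr !mulr_sumr -sumrB; apply: eq_bigr => i _.
    by rewrite /D dotvBl !dotvZr; set a := dotv _ _; set b := dotv _ _; ring.
  have q0 := sqnorm_ge0 (\sum_(j < n) w j *: (z j - x j)).
  lra.
move=> [hx hM]; split => // i y hy.
rewrite -subr_ge0 -potB_upd subr_ge0; apply: hM.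
by move=> j; rewrite /upd; case: eqP.
Qed.
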